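(* Let $S$ be a quasi-thin scheme on $X$, let $\mathbb F$ be a field of characteristic $p$, $x\in X$, and $\mathcal T=\mathcal T(x)$ the Terwilliger $\mathbb F$-algebra of $S$ with respect to $x$. Then $\mathcal T$ is semisimple if and only if either $p\neq 2$, or $p=2$ and $S$ is a thin scheme.
   Context: Let $\mathbb{F}$ be a field of characteristic $p$ ($p=0$ or a prime) and $X$ a nonempty finite set. A scheme of class $d$ on $X$ is a partition $S=\{R_0,\dots,R_d\}$ of $X\times X$ into nonempty sets such that $R_0=\{(b,b):b\in X\}$; for each $c$ there is $c'$ with $R_{c'}=\{(f,e):(e,f)\in R_c\}$; and for all $i,j,k$ the intersection number $p_{ij}^k=|\{\ell\in X:(m,\ell)\in R_i,(\ell,n)\in R_j\}|$ does not depend on $(m,n)\in R_k$. The valency of $R_a$ is $k_a=p_{aa'}^0$. $S$ is thin if all $k_a=1$ and quasi-thin if all $k_a\le 2$. For $y\in X$, $yR_a=\{z:(y,z)\in R_a\}$. $A_a\in M_X(\mathbb F)$ is the $(0,1)$ adjacency matrix of $R_a$ and $E_a^*(y)$ is the diagonal $(0,1)$-matrix with ones exactly at the diagonal positions indexed by $yR_a$. The Terwilliger $\mathbb F$-algebra $\mathcal T(y)$ is the $\mathbb F$-subalgebra of $M_X(\mathbb F)$ generated by $A_0,\dots,A_d,E_0^*(y),\dots,E_d^*(y)$. *)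

(* Defs.v *)
From HB Require Import structures.
From mathcomp Require Import all_boot all_order all_algebra.
Set Implicit Arguments. Unset Strict Implicit. Unset Printing Implicit Defensive.
Import GRing.Theory.
Local Open Scope ring_scope.

(* A scheme of class d on the finite set X is encoded by its relation-index
   function R : X -> X -> 'I_d.+1, with R_c = [set (e,f) | R e f = c]. *)
Definition is_scheme (X : finType) (d : nat) (R : X -> X -> 'I_d.+1) : Prop :=
  (forall c : 'I_d.+1, exists e f, R e f = c) /\
  (forall e f, R e f = ord0 <-> e = f) /\
  (forall c : 'I_d.+1, exists c' : 'I_d.+1, forall e f, R f e = c' <-> R e f = c) /\
  (* intersection numbers are well defined *)
  (forall (i j k : 'I_d.+1) (m n m' n' : X), R m n = k -> R m' n' = k ->
     #|[set l | (R m l == i) && (R l n == j)]| =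
     #|[set l | (R m' l == i) && (R l n' == j)]|).

Definition nbhd (X : finType) d (R : X -> X -> 'I_d.+1) (y : X) (a : 'I_d.+1)
  : {set X} := [set z | R y z == a].

Definition thin (X : finType) d (R : X -> X -> 'I_d.+1) : Prop :=
  forall (a : 'I_d.+1) (y : X), #|nbhd R y a| = 1%N.
Definition quasi_thin (X : finType) d (R : X -> X -> 'I_d.+1) : Prop :=
  forall (a : 'I_d.+1) (y : X), (#|nbhd R y a| <= 2)%N.

(* matrices in M_X(F) are indexed through enum_val : 'I_#|X| -> X *)
Definition adj_mx (F : fieldType) (X : finType) d (R : X -> X -> 'I_d.+1)
  (a : 'I_d.+1) : 'M[F]_#|X| :=
  \matrix_(i, j) (R (enum_val i) (enum_val j) == a)%:R.

Definition dual_idem (F : fieldType) (X : finType) d (R : X -> X -> 'I_d.+1)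
  (y : X) (a : 'I_d.+1) : 'M[F]_#|X| :=
  \matrix_(i, j) ((i == j) && (enum_val i \in nbhd R y a))%:R.

Inductive in_gen_alg (F : fieldType) (n : nat) (G : 'M[F]_n -> Prop)
  : 'M[F]_n -> Prop :=
| gen_in M : G M -> in_gen_alg G M
| one_in : in_gen_alg G 1%:M
| zero_in : in_gen_alg G 0
| add_in M N : in_gen_alg G M -> in_gen_alg G N -> in_gen_alg G (M + N)
| scale_in (c : F) M : in_gen_alg G M -> in_gen_alg G (c *: M)
| mul_in M N : in_gen_alg G M -> in_gen_alg G N -> in_gen_alg G (M *m N).

Definition terwilliger (F : fieldType) (X : finType) d (R : X -> X -> 'I_d.+1)
  (y : X) : 'M[F]_#|X| -> Prop :=
  in_gen_alg (fun M => exists a : 'I_d.+1,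
                 M = adj_mx F R a \/ M = dual_idem F R y a).

Definition is_ideal (F : fieldType) n (A I : 'M[F]_n -> Prop) : Prop :=
  (forall M, I M -> A M) /\ I 0 /\
  (forall M N, I M -> I N -> I (M + N)) /\
  (forall (c : F) M, I M -> I (c *: M)) /\
  (forall a M, A a -> I M -> I (a *m M) /\ I (M *m a)).

Definition mxprod (F : fieldType) n (s : seq 'M[F]_n) : 'M[F]_n :=
  foldr (fun M N => M *m N) 1%:M s.

Definition nilpotent_ideal (F : fieldType) n (I : 'M[F]_n -> Prop) : Prop :=
  exists k : nat, forall s : seq 'M[F]_n,
    size s = k -> (forall M, M \in s -> I M) -> mxprod s = 0.

(* a finite-dimensional algebra is semisimple iff its Jacobson radical is 0,
   i.e. iff it has no nonzero nilpotent two-sided ideal *)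
Definition semisimple_alg (F : fieldType) n (A : 'M[F]_n -> Prop) : Prop :=
  forall I, is_ideal A I -> nilpotent_ideal I -> forall M, I M -> M = 0.

(* Main.v *)
Require Import Defs.
From mathcomp Require Import all_boot all_order all_algebra.
From mathcomp Require Import ring.
Set Implicit Arguments. Unset Strict Implicit. Unset Printing Implicit Defensive.
Import GRing.Theory.
Local Open Scope ring_scope.


Lemma mxprod_nseq (F : fieldType) n (A : 'M[F]_n.+1) k : mxprod (nseq k A) = A ^+ k.
Proof.
elim: k => [|k IH] /=; first by rewrite idmxE.
by rewrite /mxprod /= -/(mxprod _) IH exprS mulmxE.
Qed.

Lemma tr_nilp (F : fieldType) n (A : 'M[F]_n) k : mxprod (nseq k A) = 0 -> \tr A = 0.
Proof.
case: n A => [|n] A; first by rewrite /mxtrace big_ord0.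
rewrite mxprod_nseq => Ak.
set B := map_mx (@polyC F) A.
have cXB : GRing.comm ('X%:M : 'M[{poly F}]_n.+1) B.
  by rewrite /GRing.comm -!mulmxE scalar_mxC.
have := subrXX_comm k cXB.
have -> : B ^+ k = 0 by rewrite /B -rmorphXn Ak raddf0.
rewrite subr0 => E.
have hdvd : char_poly A %| ('X - 0%:P) ^+ (k * n.+1).
  rewrite subr0 exprM -det_scalar.
  have -> : (('X ^+ k)%:M : 'M[{poly F}]_n.+1) = ('X%:M) ^+ k by rewrite rmorphXn.
  rewrite E det_mulmx.
  exact: dvdp_mulIl.
have /dvdp_exp_XsubCP [j _ hj] := hdvd.
rewrite polyC0 subr0 eqp_monic ?char_poly_monic ?monicXn // in hj.
move/eqP: hj => hj.
have sz := size_char_poly A.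
rewrite hj size_polyXn in sz.
case: sz => sz.
apply: oppr_inj; rewrite oppr0 -char_poly_trace // hj sz coefXn.
by rewrite /= eqn_leq ltnn andbF.
Qed.

Section Main.
Variables (F : fieldType) (X : finType) (d : nat) (R : X -> X -> 'I_d.+1) (x : X).

Definition at_ (M : 'M[F]_#|X|) (y z : X) : F := M (enum_rank y) (enum_rank z).

Lemma mx_ext (M N : 'M[F]_#|X|) : (forall y z, at_ M y z = at_ N y z) -> M = N.
Proof.
move=> h; apply/matrixP => i j.
by rewrite -(enum_valK i) -(enum_valK j); apply: h.
Qed.

Lemma sum_X (G : 'I_#|X| -> F) : \sum_(i < #|X|) G i = \sum_(w : X) G (enum_rank w).
Proof.
rewrite (reindex (@enum_rank X)) //.
by exists (@enum_val X X) => i _; rewrite ?enum_rankK ?enum_valK.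
Qed.

Lemma mul_at (M N : 'M[F]_#|X|) y z :
  at_ (M *m N) y z = \sum_w at_ M y w * at_ N w z.
Proof. by rewrite /at_ mxE sum_X. Qed.

Lemma add_at (M N : 'M[F]_#|X|) y z : at_ (M + N) y z = at_ M y z + at_ N y z.
Proof. by rewrite /at_ mxE. Qed.

Lemma scale_at c (M : 'M[F]_#|X|) y z : at_ (c *: M) y z = c * at_ M y z.
Proof. by rewrite /at_ mxE. Qed.

Lemma zero_at y z : at_ 0 y z = 0.
Proof. by rewrite /at_ mxE. Qed.

Lemma one_at y z : at_ 1%:M y z = (y == z)%:R.
Proof. by rewrite /at_ mxE (inj_eq (@enum_rank_inj X)). Qed.

Lemma tr_at (M : 'M[F]_#|X|) y z : at_ M^T y z = at_ M z y.
Proof. by rewrite /at_ mxE. Qed.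

Lemma adj_at a y z : at_ (adj_mx F R a) y z = (R y z == a)%:R.
Proof. by rewrite /at_ mxE !enum_rankK. Qed.

Lemma dual_at a y z : at_ (dual_idem F R x a) y z = (y == z)%:R * (R x y == a)%:R.
Proof.
rewrite /at_ mxE (inj_eq (@enum_rank_inj X)) enum_rankK inE.
by case: (y == z); case: (R x y == a); rewrite ?mul1r ?mul0r.
Qed.

Lemma trace_at (M : 'M[F]_#|X|) : \tr M = \sum_y at_ M y y.
Proof. by rewrite /mxtrace sum_X. Qed.

Lemma sum_deltal y (g : X -> F) : \sum_v (y == v)%:R * g v = g y.
Proof.
rewrite (bigD1 y) //= eqxx mul1r big1 ?addr0 // => v hv.
by rewrite eq_sym (negbTE hv) mul0r.
Qed.

Lemma sum_deltar z (g : X -> F) : \sum_v g v * (v == z)%:R = g z.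
Proof.
rewrite (bigD1 z) //= eqxx mulr1 big1 ?addr0 // => v hv.
by rewrite (negbTE hv) mulr0.
Qed.


Hypothesis HS : is_scheme R.

Definition T := @terwilliger F X d R x.

Lemma T_sum (I : Type) (r : seq I) (P : pred I) (G : I -> 'M[F]_#|X|) :
  (forall i, P i -> T (G i)) -> T (\sum_(i <- r | P i) G i).
Proof.
move=> h; apply: (big_ind T) => //; first exact: zero_in.
  by move=> ? ? ? ?; apply: add_in.
Qed.

Lemma transp c : exists c', forall e f, R f e = c' <-> R e f = c.
Proof. by case: HS => _ [_ [h _]]; apply: h. Qed.

Lemma card_cond (P Q : pred X) :
  \sum_(z | P z) (Q z)%:R = (#|[set z | P z && Q z]|)%:R :> F.
Proof.
rewrite -sum1_card natr_sum [RHS]big_mkcond [LHS]big_mkcond /=.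
by apply: eq_bigr => z _; rewrite inE; case: (P z); case: (Q z).
Qed.

Definition rowreg (M : 'M[F]_#|X|) := forall b y y', R x y = R x y' ->
  \sum_(z | R x z == b) at_ M y z = \sum_(z | R x z == b) at_ M y' z.

Lemma sum_diag b y (c : F) : \sum_(z | R x z == b) (y == z)%:R * c = (R x y == b)%:R * c.
Proof.
case: (boolP (R x y == b)) => hy.
  rewrite (bigD1 y) //= eqxx big1 ?addr0 // => z /andP[_ hz].
  by rewrite eq_sym (negbTE hz) mul0r.
rewrite big1 ?mul0r // => z hz.
have -> : (y == z) = false by apply/eqP => e; rewrite e hz in hy.
by rewrite mul0r.
Qed.

Lemma rowreg_fiber (M : 'M[F]_#|X|) (f : X -> F) y y' :
  rowreg M -> R x y = R x y' ->
  (forall w w', R x w = R x w' -> f w = f w') ->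
  \sum_w at_ M y w * f w = \sum_w at_ M y' w * f w.
Proof.
move=> hM hy hf.
rewrite (partition_big (R x) predT) //= [RHS](partition_big (R x) predT) //=.
apply: eq_bigr => c _.
case: (pickP (fun w => R x w == c)) => [w0 hw0|hno]; last first.
  by rewrite !big_pred0 // => w; rewrite hno.
have e : forall w, R x w == c -> f w = f w0.
  by move=> w /eqP hw; apply: hf; rewrite hw (eqP hw0).
rewrite (eq_bigr (fun w => at_ M y w * f w0)); last by move=> w /e ->.
rewrite [RHS](eq_bigr (fun w => at_ M y' w * f w0)); last by move=> w /e ->.
by rewrite -!mulr_suml (hM c y y' hy).
Qed.

Lemma rowreg_adj a : rowreg (adj_mx F R a).
Proof.
move=> b y y' hy.
case: (transp a) => a' ha.
rewrite (eq_bigr (fun z => (R y z == a)%:R)); last by move=> z _; rewrite adj_at.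
rewrite [RHS](eq_bigr (fun z => (R y' z == a)%:R)); last by move=> z _; rewrite adj_at.
rewrite !card_cond.
have E : forall w, [set z | (R x z == b) && (R w z == a)] =
                   [set l | (R x l == b) && (R l w == a')].
  move=> w; apply/setP => z; rewrite !inE; congr (_ && _).
  by apply/eqP/eqP => h; apply/ha.
rewrite !E; congr (_%:R).
by case: HS => _ [_ [_ h]]; apply: (h _ _ _ _ _ _ _ hy).
Qed.

Lemma rowreg_dual a : rowreg (dual_idem F R x a).
Proof.
move=> b y y' hy.
rewrite (eq_bigr (fun z => (y == z)%:R * (R x y == a)%:R)); last by move=> z _; rewrite dual_at.
rewrite [RHS](eq_bigr (fun z => (y' == z)%:R * (R x y' == a)%:R)); last by move=> z _; rewrite dual_at.
by rewrite !sum_diag hy.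
Qed.

Lemma rowreg_one : rowreg 1%:M.
Proof.
move=> b y y' hy.
rewrite (eq_bigr (fun z => (y == z)%:R * 1)); last by move=> z _; rewrite one_at mulr1.
rewrite [RHS](eq_bigr (fun z => (y' == z)%:R * 1)); last by move=> z _; rewrite one_at mulr1.
by rewrite !sum_diag hy.
Qed.

Lemma rowreg_add M N : rowreg M -> rowreg N -> rowreg (M + N).
Proof.
move=> hM hN b y y' hy.
rewrite (eq_bigr (fun z => at_ M y z + at_ N y z)); last by move=> z _; rewrite add_at.
rewrite [RHS](eq_bigr (fun z => at_ M y' z + at_ N y' z)); last by move=> z _; rewrite add_at.
by rewrite !big_split /= (hM b y y' hy) (hN b y y' hy).
Qed.

Lemma rowreg_scale c M : rowreg M -> rowreg (c *: M).
Proof.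
move=> hM b y y' hy.
rewrite (eq_bigr (fun z => c * at_ M y z)); last by move=> z _; rewrite scale_at.
rewrite [RHS](eq_bigr (fun z => c * at_ M y' z)); last by move=> z _; rewrite scale_at.
by rewrite -!mulr_sumr (hM b y y' hy).
Qed.

Lemma rowreg_zero : rowreg 0.
Proof. by move=> b y y' hy; rewrite !big1 // => z _; rewrite zero_at. Qed.

Lemma rowreg_mul M N : rowreg M -> rowreg N -> rowreg (M *m N).
Proof.
move=> hM hN b y y' hy.
rewrite (eq_bigr (fun z => \sum_w at_ M y w * at_ N w z)); last by move=> z _; rewrite mul_at.
rewrite [RHS](eq_bigr (fun z => \sum_w at_ M y' w * at_ N w z)); last by move=> z _; rewrite mul_at.
rewrite exchange_big [RHS]exchange_big /=.
rewrite (eq_bigr (fun w => at_ M y w * \sum_(z | R x z == b) at_ N w z)); last by move=> w _; rewrite mulr_sumr.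
rewrite [RHS](eq_bigr (fun w => at_ M y' w * \sum_(z | R x z == b) at_ N w z)); last by move=> w _; rewrite mulr_sumr.
exact: (@rowreg_fiber M (fun w => \sum_(z | R x z == b) at_ N w z) y y' hM hy (fun w w' hw => hN b w w' hw)).
Qed.

Lemma rowreg_T M : T M -> rowreg M.
Proof.
elim => {M}.
- by move=> M [a [->|->]]; [apply: rowreg_adj | apply: rowreg_dual].
- exact: rowreg_one.
- exact: rowreg_zero.
- by move=> M N _ hM _ hN; apply: rowreg_add.
- by move=> c M _ hM; apply: rowreg_scale.
- by move=> M N _ hM _ hN; apply: rowreg_mul.
Qed.


Lemma T_tr M : T M -> T M^T.
Proof.
elim => {M}.
- move=> M [a [->|->]].
  + case: (transp a) => a' ha.
    have -> : (adj_mx F R a)^T = adj_mx F R a'.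
      apply: mx_ext => y z; rewrite tr_at !adj_at.
      have -> : (R z y == a) = (R y z == a') by apply/eqP/eqP => h; apply/ha.
      by [].
    by apply: gen_in; exists a'; left.
  + have -> : (dual_idem F R x a)^T = dual_idem F R x a.
      apply: mx_ext => y z; rewrite tr_at !dual_at.
      by case: eqVneq => [->|]; rewrite ?mul0r.
    by apply: gen_in; exists a; right.
- by rewrite trmx1; apply: one_in.
- by rewrite trmx0; apply: zero_in.
- move=> M N _ hM _ hN.
  have -> : (M + N)^T = M^T + N^T by apply: mx_ext => y z; rewrite !(tr_at, add_at).
  exact: add_in.
- move=> c M _ hM.
  have -> : (c *: M)^T = c *: M^T by apply: mx_ext => y z; rewrite !(tr_at, scale_at).
  exact: scale_in.
- move=> M N _ hM _ hN.
  by rewrite trmx_mul; apply: mul_in.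
Qed.

Definition J := \sum_(c : 'I_d.+1) adj_mx F R c.

Lemma J_T : T J.
Proof. by apply: T_sum => c _; apply: gen_in; exists c; left. Qed.

Lemma J_at y z : at_ J y z = 1.
Proof.
rewrite /at_ summxE.
rewrite (eq_bigr (fun c => (R y z == c)%:R)); last by move=> c _; rewrite -/(at_ _ y z) adj_at.
rewrite (bigD1 (R y z)) //= eqxx big1 ?addr0 // => c hc.
by rewrite eq_sym (negbTE hc).
Qed.

Definition Blk a b (Y : 'M[F]_#|X|) := dual_idem F R x a *m Y *m dual_idem F R x b.

Lemma Blk_T a b Y : T Y -> T (Blk a b Y).
Proof.
move=> hY; apply: mul_in; first apply: mul_in => //.
  by apply: gen_in; exists a; right.
by apply: gen_in; exists b; right.
Qed.

Lemma Blk_at a b Y y z :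
  at_ (Blk a b Y) y z = (R x y == a)%:R * at_ Y y z * (R x z == b)%:R.
Proof.
rewrite mul_at.
rewrite (eq_bigr (fun w => ((R x y == a)%:R * at_ Y y w * (R x w == b)%:R) * (w == z)%:R)).
  by rewrite sum_deltar.
move=> w _; rewrite mul_at dual_at.
rewrite (eq_bigr (fun v => (y == v)%:R * ((R x y == a)%:R * at_ Y v w))).
  by rewrite sum_deltal; ring.
by move=> v _; rewrite dual_at; ring.
Qed.

Lemma tr_blk (M Y : 'M[F]_#|X|) a b :
  \tr (M *m Blk b a Y) =
  \sum_y \sum_z at_ M y z * ((R x z == b)%:R * at_ Y z y * (R x y == a)%:R).
Proof.
rewrite trace_at; apply: eq_bigr => y _; rewrite mul_at.
by apply: eq_bigr => z _; rewrite Blk_at.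
Qed.

Lemma valency a y : #|nbhd R y a| = #|nbhd R x a|.
Proof.
case: (transp a) => a' ha.
have E : forall w, nbhd R w a = [set l | (R w l == a) && (R l w == a')].
  move=> w; apply/setP => l; rewrite !inE.
  case: (boolP (R w l == a)) => //= /eqP hl; apply/esym/eqP; exact/ha.
rewrite !E.
case: HS => _ [h0 [_ h]]; apply: (h _ _ _ _ _ _ _ _).
  by apply/h0.
by apply/h0.
Qed.


Lemma KCK a (C : 'M[F]_#|X|) : 2 \in [pchar F] -> #|nbhd R x a| = 2%N -> T C ->
  Blk a a J *m C *m Blk a a J = 0.
Proof.
move=> h2 hc hC.
have hr := rowreg_T hC.
have [u0 hu0] : exists u0, R x u0 = a.
  have : (0 < #|nbhd R x a|)%N by rewrite hc.
  by case/card_gt0P => u; rewrite inE => /eqP; exists u.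
set r := \sum_(v | R x v == a) at_ C u0 v.
have Z : \sum_u (R x u == a)%:R * (\sum_(v | R x v == a) at_ C u v) = 0.
  rewrite (eq_bigr (fun u => (R x u == a)%:R * r)); last first.
    move=> u _; case: (boolP (R x u == a)) => [/eqP hu|]; last by rewrite !mul0r.
    by rewrite /r (hr a u u0) // hu hu0.
  rewrite -mulr_suml card_cond.
  have -> : [set z | true && (R x z == a)] = nbhd R x a by apply/setP => z; rewrite !inE.
  by rewrite hc (pcharf0 h2) mul0r.
apply: mx_ext => y w; rewrite zero_at.
have -> : at_ (Blk a a J *m C *m Blk a a J) y w =
   (R x y == a)%:R * (\sum_u (R x u == a)%:R * (\sum_(v | R x v == a) at_ C u v)) * (R x w == a)%:R.
  rewrite mul_at.
  rewrite (eq_bigr (fun v => \sum_u (R x y == a)%:R * ((R x u == a)%:R * at_ C u v * (R x v == a)%:R) * (R x w == a)%:R)); last first.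
    move=> v _; rewrite mul_at mulr_suml; apply: eq_bigr => u _.
    by rewrite !Blk_at !J_at; ring.
  rewrite exchange_big /= mulr_sumr mulr_suml; apply: eq_bigr => u _.
  rewrite [in RHS]big_mkcond /= !mulr_sumr mulr_suml; apply: eq_bigr => v _.
  by case: (R x v == a) => /=; ring.
by rewrite Z mulr0 mul0r.
Qed.


Definition Iset a (M : 'M[F]_#|X|) :=
  exists s : seq ('M[F]_#|X| * 'M[F]_#|X|), (forall p, p \in s -> T p.1 /\ T p.2) /\
    M = \sum_(p <- s) p.1 *m Blk a a J *m p.2.

Lemma partA a : 2 \in [pchar F] -> #|nbhd R x a| = 2%N -> ~ semisimple_alg T.
Proof.
move=> h2 hc hss.
have KT : T (Blk a a J) := Blk_T a a J_T.
have hid : is_ideal T (Iset a).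
  split.
    move=> M [s [hs ->]]; rewrite big_seq; apply: T_sum => p hp.
    by have [h1 h1'] := hs p hp; apply: mul_in => //; apply: mul_in.
  split; first by exists [::]; split => //; rewrite big_nil.
  split.
    move=> M N [s1 [h1 ->]] [s2 [h1' ->]]; exists (s1 ++ s2); split; last by rewrite big_cat.
    by move=> p; rewrite mem_cat => /orP [] hp; [apply: h1 | apply: h1'].
  split.
    move=> c M [s [hs ->]]; exists [seq (c *: p.1, p.2) | p <- s]; split.
      move=> p /mapP [q hq ->] /=; have [h1 h1'] := hs q hq; split => //; exact: scale_in.
    by rewrite big_map scaler_sumr; apply: eq_bigr => p _; rewrite !scalemxAl.
  move=> A M hA [s [hs ->]]; split.
    exists [seq (A *m p.1, p.2) | p <- s]; split.
      move=> p /mapP [q hq ->] /=; have [h1 h1'] := hs q hq; split => //; exact: mul_in.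
    by rewrite big_map mulmx_sumr; apply: eq_bigr => p _; rewrite !mulmxA.
  exists [seq (p.1, p.2 *m A) | p <- s]; split.
    move=> p /mapP [q hq ->] /=; have [h1 h1'] := hs q hq; split => //; exact: mul_in.
  by rewrite big_map mulmx_suml; apply: eq_bigr => p _; rewrite !mulmxA.
have hnil : nilpotent_ideal (Iset a).
  exists 2%N => s; case: s => [|M [|N [|]]] //= _ hs.
  have [s1 [h1 ->]] := hs M (mem_head _ _).
  have [s2 [h1' ->]] : Iset a N by apply: hs; rewrite !inE eqxx orbT.
  rewrite /mxprod /= mulmx1 mulmx_suml big1_seq // => p /andP [_ hp].
  rewrite mulmx_sumr big1_seq // => q /andP [_ hq].
  have [hp1 hp2] := h1 p hp.
  have [hq1 hq2] := h1' q hq.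
  have -> : p.1 *m Blk a a J *m p.2 *m (q.1 *m Blk a a J *m q.2) =
            p.1 *m (Blk a a J *m (p.2 *m q.1) *m Blk a a J) *m q.2 by rewrite !mulmxA.
  by rewrite KCK ?mulmx0 ?mul0mx //; apply: mul_in.
have hK : Iset a (Blk a a J).
  exists [:: (1%:M, 1%:M)]; split; last by rewrite big_seq1 /= mul1mx mulmx1.
  by move=> p; rewrite inE => /eqP -> /=; split; apply: one_in.
have K0 := hss _ hid hnil _ hK.
have [u0 hu0] : exists u0, R x u0 = a.
  have : (0 < #|nbhd R x a|)%N by rewrite hc.
  by case/card_gt0P => u; rewrite inE => /eqP; exists u.
have := Blk_at a a J u0 u0.
rewrite K0 zero_at J_at hu0 eqxx mulr1 mul1r => /esym/eqP.
by rewrite oner_eq0.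
Qed.

Lemma sum_blk (f g : X -> X -> F) a b :
  \sum_y \sum_z f y z * ((R x z == b)%:R * g y z * (R x y == a)%:R) =
  \sum_(y in nbhd R x a) \sum_(z in nbhd R x b) f y z * g y z.
Proof.
rewrite [RHS]big_mkcond /=; apply: eq_bigr => y _.
rewrite [in RHS]big_mkcond /= inE.
case: (R x y == a) => /=; last by rewrite big1 // => z _; rewrite !mulr0.
apply: eq_bigr => z _; rewrite inE.
by case: (R x z == b) => /=; ring.
Qed.

Lemma sum2 (g : X -> F) y0 y1 : y0 != y1 -> \sum_(y in [set y0; y1]) g y = g y0 + g y1.
Proof.
move=> h; rewrite big_setU1 ?big_set1 //.
by rewrite inE.
Qed.

Lemma mulrn_eq0' (r : F) m : (0 < m <= 2)%N -> (2%:R != 0 :> F) -> r *+ m = 0 -> r = 0.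
Proof.
move=> /andP [h0 h2] hF; rewrite -mulr_natr => /eqP; rewrite mulf_eq0 => /orP [/eqP //|].
case: m h0 h2 => [|[|[|]]] //= _ _; first by rewrite oner_eq0.
by rewrite (negbTE hF).
Qed.

Lemma set_two (A : {set X}) y0 : #|A| = 2%N -> y0 \in A -> exists y1, y0 != y1 /\ A = [set y0; y1].
Proof.
move=> hA; have /cards2P [u [v [huv ->]]] : #|A| == 2%N by rewrite hA.
rewrite !inE => /orP [] /eqP ->; first by exists v.
by exists u; split; [rewrite eq_sym | rewrite setUC].
Qed.

Lemma set_one (A : {set X}) y0 : #|A| = 1%N -> y0 \in A -> A = [set y0].
Proof.
move=> hA; have /cards1P [u ->] : #|A| == 1%N by rewrite hA.
by rewrite inE => /eqP ->.
Qed.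

Lemma block_zero (f : X -> X -> F) a b y0 w0 :
  R x y0 = a -> R x w0 = b ->
  (forall y y', R x y = a -> R x y' = a ->
     \sum_(z | R x z == b) f y z = \sum_(z | R x z == b) f y' z) ->
  (forall z z', R x z = b -> R x z' = b ->
     \sum_(y | R x y == a) f y z = \sum_(y | R x y == a) f y z') ->
  \sum_(y in nbhd R x a) \sum_(z in nbhd R x b) f y z = 0 ->
  \sum_(y in nbhd R x a) \sum_(z in nbhd R x b) f y z * f y z = 0 ->
  (#|nbhd R x a| <= 2)%N -> (#|nbhd R x b| <= 2)%N ->
  (2%:R != 0 :> F \/ (#|nbhd R x a| = 1%N /\ #|nbhd R x b| = 1%N)) ->
  f y0 w0 = 0.
Proof.
move=> ha hb hr hc hs hq hA hB h2.
have y0A : y0 \in nbhd R x a by rewrite inE ha.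
have w0B : w0 \in nbhd R x b by rewrite inE hb.
have eA : forall g : X -> F, \sum_(y | R x y == a) g y = \sum_(y in nbhd R x a) g y.
  by move=> g; apply: eq_bigl => y; rewrite inE.
have eB : forall g : X -> F, \sum_(z | R x z == b) g z = \sum_(z in nbhd R x b) g z.
  by move=> g; apply: eq_bigl => y; rewrite inE.
case: h2 => [h2 | [h1a h1b]]; last first.
  move: hs; rewrite (set_one h1a y0A) (set_one h1b w0B) !big_set1 //.
have rs0 : forall y, R x y = a -> \sum_(z in nbhd R x b) f y z = 0.
  move=> y hy.
  apply: (@mulrn_eq0' _ #|nbhd R x a|) => //.
    by rewrite hA andbT card_gt0; apply/set0Pn; exists y0.
  rewrite -sumr_const -[RHS]hs; apply: eq_bigr => u; rewrite inE => /eqP hu.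
  by rewrite -!eB; apply: hr.
have cs0 : forall z, R x z = b -> \sum_(y in nbhd R x a) f y z = 0.
  move=> z hz.
  apply: (@mulrn_eq0' _ #|nbhd R x b|) => //.
    by rewrite hB andbT card_gt0; apply/set0Pn; exists w0.
  rewrite -sumr_const -[RHS]hs [RHS]exchange_big /=; apply: eq_bigr => u; rewrite inE => /eqP hu.
  by rewrite -!eA; apply: hc.
have gA : (0 < #|nbhd R x a|)%N by rewrite card_gt0; apply/set0Pn; exists y0.
have gB : (0 < #|nbhd R x b|)%N by rewrite card_gt0; apply/set0Pn; exists w0.
have [h1b|h2b] : (#|nbhd R x b| = 1%N) \/ (#|nbhd R x b| = 2%N).
    by move: hB gB; case: #|_| => [|[|[|]]] //; auto.
  by rewrite -(rs0 y0 ha) (set_one h1b w0B) big_set1.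
have [h1a|h2a] : (#|nbhd R x a| = 1%N) \/ (#|nbhd R x a| = 2%N).
    by move: hA gA; case: #|_| => [|[|[|]]] //; auto.
  by rewrite -(cs0 w0 hb) (set_one h1a y0A) big_set1.
have [y1 [ny EA]] := set_two h2a y0A.
have [w1 [nw EB]] := set_two h2b w0B.
have y1a : R x y1 = a.
  have : y1 \in nbhd R x a by rewrite EA !inE eqxx orbT.
  by rewrite inE => /eqP.
have e1 := rs0 y0 ha; have e2 := rs0 y1 y1a; have e3 := cs0 w0 hb.
rewrite EA EB in hq e1 e2 e3.
rewrite !sum2 // in hq e1 e2 e3.
set u := f y0 w0 in hq e1 e2 e3 *.
have E1 : f y0 w1 = - u by apply/eqP; rewrite -addr_eq0 addrC; apply/eqP.
have E2 : f y1 w0 = - u by apply/eqP; rewrite -addr_eq0 addrC; apply/eqP.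
have E3 : f y1 w1 = - f y1 w0 by apply/eqP; rewrite -addr_eq0 addrC; apply/eqP.
rewrite E3 E2 E1 in hq.
have : (2%:R * 2%:R) * (u * u) = 0 by rewrite -[RHS]hq; ring.
move/eqP; rewrite !mulf_eq0 (negbTE h2) /= orbb => /eqP //.
Qed.

Lemma partB : quasi_thin R -> (2%:R != 0 :> F \/ thin R) -> semisimple_alg T.
Proof.
move=> hq h2 I hid hnil M hIM.
case: hid => hsub [_ [_ [_ hmul]]].
have TM := hsub M hIM.
have tr0 : forall N, T N -> \tr (M *m N) = 0.
  move=> N hN; have hMN := (hmul N M hN hIM).2.
  case: hnil => k hk; apply: (@tr_nilp _ _ _ k); apply: hk; first by rewrite size_nseq.
  by move=> P; rewrite mem_nseq => /andP [_ /eqP ->].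
have rM := rowreg_T TM; have cM := rowreg_T (T_tr TM).
apply: mx_ext => y0 w0; rewrite zero_at.
have hs := tr0 _ (Blk_T (R x w0) (R x y0) J_T).
have hq2 := tr0 _ (Blk_T (R x w0) (R x y0) (T_tr TM)).
rewrite tr_blk (sum_blk (at_ M) (fun y z => at_ J z y)) in hs.
rewrite tr_blk (sum_blk (at_ M) (fun y z => at_ M^T z y)) in hq2.
apply: (@block_zero (at_ M) (R x y0) (R x w0)) => //.
- by move=> y y' hy hy'; apply: rM; rewrite hy hy'.
- have E : forall w, \sum_(y | R x y == R x y0) at_ M^T w y = \sum_(y | R x y == R x y0) at_ M y w.
    by move=> w; apply: eq_bigr => y _; rewrite tr_at.
  by move=> z z' hz hz'; rewrite -!E; apply: cM; rewrite hz hz'.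
- rewrite -[RHS]hs; apply: eq_bigr => y _; apply: eq_bigr => z _.
  by rewrite J_at mulr1.
- rewrite -[RHS]hq2; apply: eq_bigr => y _; apply: eq_bigr => z _.
  by rewrite tr_at.
- by case: h2 => [h|ht]; [left | right; split; apply: ht].
Qed.
End Main.

Theorem theoremB (F : fieldType) (X : finType) (d : nat)
  (R : X -> X -> 'I_d.+1) (x : X) :
  is_scheme R -> quasi_thin R ->
  (semisimple_alg (@terwilliger F X d R x) <->
     (2%N \notin [pchar F]) \/ ((2%N \in [pchar F]) /\ thin R)).
Proof.
move=> HS hq; split.
- move=> hss.
  case h2: (2%N \in [pchar F]); last by left.
  right; split => // a y.
  rewrite (@valency X d R x HS a y).
  have gt : (0 < #|nbhd R x a|)%N.
    have [hne _] := HS; have [e [f hef]] := hne a.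
    rewrite -(@valency X d R x HS a e) card_gt0; apply/set0Pn; exists f.
    by rewrite inE hef.
  have := hq a x.
  case E: #|nbhd R x a| gt => [|[|[|]]] //= _ _.
  by exfalso; apply: (partA (F := F) HS h2 E hss).
- move=> h; apply: (partB (F := F) HS hq).
  case: h => [h2 | [_ ht]]; last by right.
  left; move: h2; rewrite inE /= => h2.
  by apply: contra h2 => ->.
Qed.
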